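(* Let $\Bbbk$ be a field of characteristic zero, let $d\ge 2$ be an integer, and let $A$ be a vector space over $\Bbbk$ (of arbitrary, possibly infinite, dimension) equipped with a symmetric $d$-linear map $\mu: A^d\to A$. If $A$ is Yagzhev nil, then $A$ is Engel. More precisely, if $A$ is Yagzhev nil of nilindex $p$, then $A$ is $n$-Engel for $$n = d\left\lfloor \frac{p-2}{d-1}\right\rfloor + 1.$$
   Context: The map $\mu$ is symmetric: $\mu(x_1,\dots,x_d)=\mu(x_{\sigma(1)},\dots,x_{\sigma(d)})$ for all $\sigma\in S_d$ and all $x_i\in A$. For $x,y\in A$ define $\mathrm{ad}_x(y)=\mu(x,\dots,x,y)$ (with $d-1$ copies of $x$), $\mathrm{ad}_x^1=\mathrm{ad}_x$, and $\mathrm{ad}_x^{k+1}(y)=\mu(x,\dots,x,\mathrm{ad}_x^k(y))$. The algebra $(A,\mu)$ is called $n$-Engel if $\mathrm{ad}_x^n(y)=0$ for all $x,y\in A$, and Engel if it is $n$-Engel for some positive integer $n$. Define maps $T_q:A\to A$ for positive integers $q$ recursively by $T_1(x)=x$ and, for $q>1$, $T_q(x)=\sum \mu(T_{i_1}(x),\dots,T_{i_d}(x))$, where the sum runs over all $d$-tuples $(i_1,\dots,i_d)$ of positive integers with $i_1+\dots+i_d=q$. The algebra $A$ is called Yagzhev nil of nilindex $p$ (for a positive integer $p$) if $T_q(x)=0$ for all $x\in A$ and all integers $q\ge p$; it is called Yagzhev nil if it is Yagzhev nil of nilindex $p$ for some $p$. *)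

(* Defs.v *)
From HB Require Import structures.
From mathcomp Require Import all_boot all_order all_algebra all_fingroup.
Set Implicit Arguments.
Unset Strict Implicit.
Unset Printing Implicit Defensive.
Import GRing.Theory.
Local Open Scope ring_scope.

Section DAry.
Variables (k : fieldType) (A : lmodType k) (d : nat).
Variable mu : {ffun 'I_d -> A} -> A.

Definition multilinear : Prop :=
  forall (i : 'I_d) (f : {ffun 'I_d -> A}) (a : k) (x y : A),
    mu [ffun j => if j == i then a *: x + y else f j] =
    a *: mu [ffun j => if j == i then x else f j] + mu [ffun j => if j == i then y else f j].

Definition symmetric_op : Prop :=
  forall (s : 'S_d) (f : {ffun 'I_d -> A}), mu [ffun j => f (s j)] = mu f.

Definition ad (x y : A) : A :=
  mu [ffun j : 'I_d => if (j : nat) == d.-1 then y else x].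

Definition adn (n : nat) (x y : A) : A := iter n (ad x) y.

Definition n_Engel (n : nat) : Prop := forall x y : A, adn n x y = 0.

Definition Engel : Prop := exists n, (0 < n)%N /\ n_Engel n.

(* T_q, defined with fuel; T q x := Tfuel q q x. For d >= 2 each index
   i_j occurring in the sum defining T_q satisfies i_j <= q - 1, so fuel q
   suffices. *)
Fixpoint Tfuel (fuel q : nat) (x : A) : A :=
  match fuel with
  | O => 0
  | fuel'.+1 =>
      if q == 1%N then x else
      \sum_(t : {ffun 'I_d -> 'I_q.+1} |
              [forall j, (0 < (t j : nat))%N] && ((\sum_(j < d) (t j : nat))%N == q))
         mu [ffun j => Tfuel fuel' (t j) x]
  end.

Definition T (q : nat) (x : A) : A := Tfuel q q x.

Definition Yagzhev_nil_index (p : nat) : Prop :=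
  (0 < p)%N /\ forall (x : A) (q : nat), (p <= q)%N -> T q x = 0.

Definition Yagzhev_nil : Prop := exists p, Yagzhev_nil_index p.

End DAry.

(* Main.v *)
Require Import Defs.
From HB Require Import structures.
From mathcomp Require Import all_boot all_order all_algebra all_fingroup.
From mathcomp Require Import zify.
Set Implicit Arguments.
Unset Strict Implicit.
Unset Printing Implicit Defensive.
Import GRing.Theory.
Local Open Scope ring_scope.

Section Main.
Variables (k : fieldType) (A : lmodType k) (d : nat) (mu : {ffun 'I_d -> A} -> A).
Hypothesis d2 : (2 <= d)%N.
Hypothesis ml : multilinear mu.
Hypothesis char0 : (GRing.pchar k) =i pred0.

Definition upd (f : {ffun 'I_d -> A}) (i : 'I_d) (x : A) : {ffun 'I_d -> A} :=
  [ffun j => if j == i then x else f j].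

Lemma mu_updDZ (i : 'I_d) (f : {ffun 'I_d -> A}) (a : k) (x y : A) : mu (upd f i (a *: x + y)) = a *: mu (upd f i x) + mu (upd f i y).
Proof. exact: ml. Qed.

Lemma mu_upd0 (i : 'I_d) (f : {ffun 'I_d -> A}) : mu (upd f i 0) = 0.
Proof.
have h := mu_updDZ i f 1 0 0; rewrite scaler0 addr0 scale1r in h.
have : mu (upd f i 0) + mu (upd f i 0) = mu (upd f i 0) + 0 by rewrite addr0 -h.
by move/addrI.
Qed.

Lemma mu_zero (f : {ffun 'I_d -> A}) (i : 'I_d) : f i = 0 -> mu f = 0.
Proof.
move=> fi; suff -> : f = upd f i 0 by apply: mu_upd0.
by apply/ffunP => j; rewrite ffunE; case: eqP => // ->.
Qed.

Lemma mu_updD (i : 'I_d) (f : {ffun 'I_d -> A}) (x y : A) : mu (upd f i (x + y)) = mu (upd f i x) + mu (upd f i y).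
Proof. by have := mu_updDZ i f 1 x y; rewrite !scale1r. Qed.

Lemma mu_updZ (i : 'I_d) (f : {ffun 'I_d -> A}) (a : k) (x : A) : mu (upd f i (a *: x)) = a *: mu (upd f i x).
Proof. by have := mu_updDZ i f a x 0; rewrite !addr0 mu_upd0 addr0. Qed.

Lemma mu_upd_sum (i : 'I_d) (f : {ffun 'I_d -> A}) (I : Type) (r : seq I) (P : pred I) (G : I -> A) :
  mu (upd f i (\sum_(l <- r | P l) G l)) = \sum_(l <- r | P l) mu (upd f i (G l)).
Proof.
exact: (big_morph (fun x => mu (upd f i x)) (mu_updD i f) (mu_upd0 i f)).
Qed.

Lemma mu_scale_gen (a : 'I_d -> k) (v : 'I_d -> A) m : (m <= d)%N ->
  mu [ffun j : 'I_d => if (j < m)%N then a j *: v j else v j] =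
  (\prod_(j : 'I_d | (j < m)%N) a j) *: mu [ffun j => v j].
Proof.
elim: m => [|m IH] hm.
  rewrite big_pred0 // scale1r; congr mu; apply/ffunP => j; by rewrite !ffunE.
have hm' : (m < d)%N by [].
pose im := Ordinal hm'.
have -> : [ffun j : 'I_d => if (j < m.+1)%N then a j *: v j else v j] =
   upd [ffun j : 'I_d => if (j < m)%N then a j *: v j else v j] im (a im *: v im).
  apply/ffunP => j; rewrite !ffunE; have [->|ne] := eqVneq j im; first by rewrite /= ltnSn.
  have : (j : nat) != m by apply: contra ne => /eqP e; apply/eqP/val_inj.
  by rewrite ltnS leq_eqVlt => /negbTE ->.
rewrite mu_updZ.
have -> : upd [ffun j : 'I_d => if (j < m)%N then a j *: v j else v j] im (v im) =
   [ffun j : 'I_d => if (j < m)%N then a j *: v j else v j].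
  apply/ffunP => j; rewrite !ffunE; have [->|ne] := eqVneq j im => //=.
  by rewrite ltnn.
rewrite IH 1?ltnW // scalerA [in RHS](bigD1 im) /=; last by rewrite ltnSn.
congr (_ * _ *: _).
apply: eq_bigl => j; have [->|ne] := eqVneq j im; first by rewrite /= ltnn andbF.
have : (j : nat) != m by apply: contra ne => /eqP e; apply/eqP/val_inj.
by rewrite andbT => h; apply/idP/idP => ?; lia.
Qed.

Lemma mu_scale (a : 'I_d -> k) (v : 'I_d -> A) :
  mu [ffun j => a j *: v j] = (\prod_j a j) *: mu [ffun j => v j].
Proof.
have -> : \prod_j a j = \prod_(j : 'I_d | (j < d)%N) a j by apply: eq_bigl => j; rewrite ltn_ord.
rewrite -(mu_scale_gen a v (leqnn d)).
by congr mu; apply/ffunP => j; rewrite !ffunE ltn_ord.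
Qed.


Lemma mu_sum_gen B (g : 'I_d -> 'I_B.+1 -> A) m (f : {ffun 'I_d -> A}) : (m <= d)%N ->
  mu [ffun j : 'I_d => if (j < m)%N then \sum_(i < B.+1) g j i else f j] =
  \sum_(s : {ffun 'I_d -> 'I_B.+1} | [forall j : 'I_d, (m <= j)%N ==> (s j == ord0)])
     mu [ffun j : 'I_d => if (j < m)%N then g j (s j) else f j].
Proof.
elim: m f => [|m IH] f hm.
  rewrite (eq_bigl (fun s => s == [ffun => ord0])); last first.
    move=> s; apply/forallP/eqP => [h|->].
      by apply/ffunP => j; rewrite ffunE; apply/eqP; exact: (implyP (h j)).
    by move=> j; rewrite ffunE eqxx implybT.
  rewrite big_pred1_eq; congr mu; apply/ffunP => j; by rewrite !ffunE.
pose im := Ordinal hm.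
set H := [ffun j : 'I_d => if (j < m)%N then \sum_(i < B.+1) g j i else f j].
have -> : [ffun j : 'I_d => if (j < m.+1)%N then \sum_(i < B.+1) g j i else f j] =
    upd H im (\sum_(i < B.+1) g im i).
  apply/ffunP => j; rewrite !ffunE; have [->|ne] := eqVneq j im; first by rewrite /= ltnSn.
  have : (j : nat) != m by apply: contra ne => /eqP e; apply/eqP/val_inj.
  by move=> h; rewrite ltnS leq_eqVlt (negbTE h).
rewrite mu_upd_sum.
transitivity (\sum_(i < B.+1) \sum_(s : {ffun 'I_d -> 'I_B.+1} | [forall j : 'I_d, (m <= j)%N ==> (s j == ord0)])
   mu [ffun j : 'I_d => if (j < m)%N then g j (s j) else upd f im (g im i) j]).
  apply: eq_bigr => i _; rewrite -IH; last exact: ltnW.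
  congr mu; apply/ffunP => j; rewrite !ffunE; have [->|ne] := eqVneq j im; first by rewrite /= ltnn.
  done.
rewrite [RHS](partition_big (fun s : {ffun 'I_d -> 'I_B.+1} => s im) xpredT) //=.
apply: eq_bigr => i _.
rewrite [RHS](reindex_onto (fun s : {ffun 'I_d -> 'I_B.+1} => [ffun j => if j == im then i else s j])
                      (fun s : {ffun 'I_d -> 'I_B.+1} => [ffun j => if j == im then ord0 else s j])) /=;
  last first.
  move=> s /andP[_ /eqP <-]; apply/ffunP => j; rewrite !ffunE; by case: eqVneq => [->|].
apply: eq_big => s.
  apply/idP/idP.
    move/forallP => P; apply/andP; split; first (apply/andP; split).
        apply/forallP => j; rewrite ffunE; case: (eqVneq j im) => [->|ne]; first by rewrite /= ltnn.
        by apply/implyP => hj; apply: (implyP (P j)); exact: ltnW.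
      by rewrite ffunE eqxx.
    apply/eqP/ffunP => j; rewrite !ffunE; case: (eqVneq j im) => [->|//].
    by apply/esym/eqP; apply: (implyP (P im)); rewrite /= leqnn.
  move/andP => [/andP[/forallP P _] /eqP Q]; apply/forallP => j; apply/implyP => hj.
  case: (eqVneq j im) => [->|ne].
    by have := congr1 (fun F : {ffun 'I_d -> 'I_B.+1} => F im) Q; rewrite !ffunE eqxx => <-.
  have hj' : (m.+1 <= j)%N.
    have : (j : nat) != m by apply: contra ne => /eqP e; apply/eqP/val_inj.
    move=> h; lia.
  by have := implyP (P j) hj'; rewrite ffunE (negbTE ne).
move=> _; congr mu; apply/ffunP => j; rewrite !ffunE.
have [->|ne] := eqVneq j im; first by rewrite /= ltnn ltnSn.
have : (j : nat) != m by apply: contra ne => /eqP e; apply/eqP/val_inj.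
move=> h; have -> : (j < m.+1)%N = (j < m)%N by apply/idP/idP => ?; lia.
by case: ifP.
Qed.

Lemma mu_sum B (g : 'I_d -> 'I_B.+1 -> A) :
  mu [ffun j => \sum_(i < B.+1) g j i] =
  \sum_(s : {ffun 'I_d -> 'I_B.+1}) mu [ffun j => g j (s j)].
Proof.
have := mu_sum_gen g [ffun => 0] (leqnn d).
have -> : [ffun j : 'I_d => if (j < d)%N then \sum_(i < B.+1) g j i else [ffun=> 0] j] =
  [ffun j => \sum_(i < B.+1) g j i] by apply/ffunP => j; rewrite !ffunE ltn_ord.
move=> ->; apply: eq_big => s.
  by apply/forallP => j; rewrite leqNgt ltn_ord.
by move=> _; congr mu; apply/ffunP => j; rewrite !ffunE ltn_ord.
Qed.


Definition ev (B : nat) (c : nat -> A) (l : k) : A := \sum_(n < B) l ^+ n *: c n.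
Definition conv (B : nat) (c : 'I_d -> nat -> A) (n : nat) : A :=
  \sum_(s : {ffun 'I_d -> 'I_B.+1} | (\sum_j (s j : nat) == n)%N) mu [ffun j => c j (s j)].

Lemma sum_partition (T : finType) (w : T -> nat) N (G : T -> A) :
  (forall t, (w t < N)%N) -> \sum_t G t = \sum_(n < N) \sum_(t | w t == n) G t.
Proof.
move=> hw; rewrite (partition_big (fun t => Ordinal (hw t)) xpredT) //=.
Qed.

Lemma wbound B (s : {ffun 'I_d -> 'I_B.+1}) : (\sum_j (s j : nat) < (d * B).+1)%N.
Proof.
rewrite ltnS; apply: leq_trans (_ : \sum_(j < d) B <= _)%N.
  by apply: leq_sum => j _; rewrite -ltnS.
by rewrite sum_nat_const card_ord.
Qed.

Lemma mu_ev B (c : 'I_d -> nat -> A) l :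
  mu [ffun j => ev B.+1 (c j) l] = ev (d * B).+1 (conv B c) l.
Proof.
rewrite /ev mu_sum.
under eq_bigr => s _ do rewrite (mu_scale (fun j => l ^+ s j) (fun j => c j (s j))) prodrXr.
rewrite [LHS](sum_partition (fun s : {ffun 'I_d -> 'I_B.+1} => l ^+ (\sum_j (s j : nat))%N *: mu [ffun j => c j (s j)]) (@wbound B)).
apply: eq_bigr => n _; rewrite /conv scaler_sumr; apply: eq_bigr => s /eqP <-.
by congr (_ *: mu _); apply/ffunP => j; rewrite ffunE.
Qed.


Lemma natf_neq0 n : (0 < n)%N -> n%:R != 0 :> k.
Proof. by move=> hn; rewrite ((pcharf0P _).1 char0) -lt0n. Qed.


Lemma ev_inj B c : (forall l, ev B c l = 0) -> forall n, (n < B)%N -> c n = 0.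
Proof.
move=> H n hn.
pose a : 'rV[k]_B := \row_(j < B) (j%:R : k).
pose V := Vandermonde B a.
have ha : forall j, a 0 j = (j : nat)%:R by move=> j; rewrite mxE.
have uV : V \in unitmx.
  rewrite unitmxE det_Vandermonde unitfE; apply/prodf_neq0 => i _; apply/prodf_neq0 => j hij.
  by rewrite !ha -natrB ?natf_neq0 ?subn_gt0 //; exact: ltnW.
have e : c n = \sum_(i < B) (V *m invmx V) i (Ordinal hn) *: c i.
  rewrite mulmxV // (bigD1 (Ordinal hn)) // mxE eqxx scale1r big1 => [|i ne].
    by rewrite /= addr0.
  by rewrite /scalar_mx mxE (negbTE ne) scale0r.
rewrite e; under eq_bigr do rewrite mxE scaler_suml.
rewrite exchange_big /=; apply: big1 => j _.
under eq_bigr do rewrite mulrC -scalerA.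
rewrite -scaler_sumr.
have -> : \sum_(i < B) V i j *: c i = ev B c (a 0 j) by apply: eq_bigr => i _; rewrite !mxE.
by rewrite H scaler0.
Qed.


Lemma sum_ge (t : 'I_d -> nat) j : (t j <= \sum_i t i)%N.
Proof. by rewrite (bigD1 j) //= leq_addr. Qed.

Lemma part_lt (t : 'I_d -> nat) j : (forall i, 0 < t i)%N -> (t j < \sum_i t i)%N.
Proof.
move=> pos.
have h0 : (0 < d)%N by lia.
pose i0 : 'I_d := Ordinal h0.
pose i1 : 'I_d := Ordinal d2.
pose j' := if j == i0 then i1 else i0.
have ne : j' != j.
  rewrite /j'; case: (eqVneq j i0) => [->|ne0]; last by rewrite eq_sym.
  by apply/eqP => /(congr1 val).
rewrite (bigD1 j) //= (bigD1 j') //=.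
have := pos j'; lia.
Qed.

Definition vf B (s : {ffun 'I_d -> 'I_B}) : {ffun 'I_d -> nat} := [ffun j => (s j : nat)].

Lemma sum_widen B1 B2 (P : pred {ffun 'I_d -> nat}) (G : {ffun 'I_d -> nat} -> A) :
  (B1 <= B2)%N ->
  (forall s : {ffun 'I_d -> nat}, P s -> (exists j, B1 < s j)%N -> G s = 0) ->
  \sum_(s : {ffun 'I_d -> 'I_B2.+1} | P (vf s)) G (vf s) =
  \sum_(s : {ffun 'I_d -> 'I_B1.+1} | P (vf s)) G (vf s).
Proof.
move=> hB H.
rewrite (bigID (fun s : {ffun 'I_d -> 'I_B2.+1} => [forall j, s j <= B1]%N)) /=.
rewrite [X in _ + X]big1 ?addr0; last first.
  move=> s /andP[Ps /forallPn [j]]; rewrite -ltnNge => hj; apply: H Ps _.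
  by exists j; rewrite ffunE.
have hB' : (B1.+1 <= B2.+1)%N by [].
rewrite (reindex_onto (fun s : {ffun 'I_d -> 'I_B1.+1} => [ffun j => widen_ord hB' (s j)])
                      (fun s : {ffun 'I_d -> 'I_B2.+1} => [ffun j => inord (s j) : 'I_B1.+1])) /=;
  last first.
  move=> s /andP[_ /forallP hs]; apply/ffunP => j; apply: val_inj.
  by rewrite !ffunE /= inordK // ltnS.
have E : forall s : {ffun 'I_d -> 'I_B1.+1},
    vf [ffun j => widen_ord hB' (s j)] = vf s.
  by move=> s; apply/ffunP => j; rewrite !ffunE.
apply: eq_big => s.
  rewrite E; case: (P (vf s)) => //=.
  apply/andP; split.
    by apply/forallP => j; rewrite ffunE /= -ltnS.
  apply/eqP/ffunP => j; apply: val_inj; by rewrite !ffunE /= inord_val.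
by move=> _; rewrite E.
Qed.

Lemma Tfuel_q0 f x : Tfuel mu f 0 x = 0.
Proof.
case: f => [//|f] /=.
apply: big1 => t /andP[/forallP pos /eqP S].
have h0 : (0 < d)%N by lia.
have := @sum_ge (fun i => t i : nat) (Ordinal h0); have := pos (Ordinal h0).
rewrite S; lia.
Qed.

Lemma Tfuel_eq f1 f2 q x : (q <= f1)%N -> (q <= f2)%N -> Tfuel mu f1 q x = Tfuel mu f2 q x.
Proof.
elim: f1 f2 q => [|f IH] f2 q.
  by rewrite leqn0 => /eqP -> _; rewrite !Tfuel_q0.
case: f2 => [|g] h1 h2.
  by move: h2; rewrite leqn0 => /eqP ->; rewrite !Tfuel_q0.
rewrite /=; case: (q == 1%N) => //.
apply: eq_bigr => t /andP[/forallP pos /eqP S]; congr mu; apply/ffunP => j; rewrite !ffunE.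
have := @part_lt (fun i => t i : nat) j pos; rewrite S => lt.
apply: IH; lia.
Qed.

Lemma T_unfold q x : (2 <= q)%N ->
  T mu q x = \sum_(t : {ffun 'I_d -> 'I_q.+1} |
              [forall j, (0 < (t j : nat))%N] && ((\sum_(j < d) (t j : nat))%N == q))
         mu [ffun j => T mu (t j) x].
Proof.
case: q => [//|q] hq; rewrite /T /=.
have -> : (q.+1 == 1%N) = false by apply/eqP; lia.
apply: eq_bigr => t /andP[/forallP pos /eqP S]; congr mu; apply/ffunP => j; rewrite !ffunE.
have := @part_lt (fun i => t i : nat) j pos; rewrite S => lt.
apply: Tfuel_eq; lia.
Qed.

Lemma T0 x : T mu 0 x = 0.
Proof. by []. Qed.
Lemma T1 x : T mu 1 x = x.
Proof. by []. Qed.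

Hypothesis sym : symmetric_op mu.

Lemma mu_sym_upd (y v : A) (j0 : 'I_d) :
  mu [ffun j => if j == j0 then v else y] = ad mu y v.
Proof.
have hl : (d.-1 < d)%N by lia.
pose last : 'I_d := Ordinal hl.
rewrite /ad -(sym (tperm j0 last)); congr mu; apply/ffunP => j; rewrite !ffunE.
have -> : (tperm j0 last j == j0) = (j == last).
  apply/eqP/eqP => [h|->]; last by rewrite tpermR.
  by apply: (@perm_inj _ (tperm j0 last)); rewrite h tpermR.
by rewrite -val_eqE.
Qed.

Lemma sum_mod (t : 'I_d -> nat) :
  (forall j, t j %% d.-1 = 1 %% d.-1)%N -> ((\sum_j t j) %% d.-1 = 1 %% d.-1)%N.
Proof.
move=> h; rewrite -modn_summ (eq_bigr (fun _ => 1 %% d.-1)%N); last by move=> j _; rewrite h.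
rewrite sum_nat_const card_ord modnMmr muln1.
have -> : d = (1 + d.-1)%N by lia.
by rewrite modnDr.
Qed.

Lemma Tfuel_mod f q x : (q %% d.-1 != 1 %% d.-1)%N -> Tfuel mu f q x = 0.
Proof.
elim: f q => [//|f IH] q hq /=.
case: eqP => [q1|_]; first by move: hq; rewrite q1 eqxx.
apply: big1 => t /andP[/forallP pos /eqP S].
case: (boolP [forall j, (t j %% d.-1 == 1 %% d.-1)%N]) => [/forallP all|/forallPn [j hj]].
  have := @sum_mod (fun j => t j) (fun j => eqP (all j)); rewrite S => e.
  by move: hq; rewrite e eqxx.
by apply: (@mu_zero _ j); rewrite ffunE; apply: IH.
Qed.

Variable p : nat.
Hypothesis hp : Yagzhev_nil_index mu p.

Definition Fs x := \sum_(q < p) T mu q x.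

Lemma F1 x : mu [ffun _ => Fs x] = Fs x - x.
Proof.
case: hp => p0 hT.
have [p' ep] : exists p', p = p'.+1 by exists p.-1; lia.
rewrite /Fs ep.
rewrite (mu_sum (fun _ (i : 'I_p'.+1) => T mu i x)).
rewrite (sum_partition _ (@wbound p')).
set N := (d * p').+1.
have zero_slot : forall B (s : {ffun 'I_d -> 'I_B}), (exists j, (s j : nat) = 0%N) ->
    mu [ffun j => T mu (s j) x] = 0.
  move=> B s [j hj]; apply: (@mu_zero _ j); rewrite ffunE hj; exact: T0.
have claim : forall n : 'I_N,
    \sum_(s : {ffun 'I_d -> 'I_p'.+1} | (\sum_j (s j : nat))%N == n) mu [ffun j => T mu (s j) x]
    = T mu n x - (if (n : nat) == 1%N then x else 0).
  move=> n; case: (leqP 2 n) => hn.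
    have -> : ((n : nat) == 1%N) = false by apply/eqP; lia.
    rewrite subr0 T_unfold //.
    transitivity (\sum_(s : {ffun 'I_d -> 'I_p'.+1} | [forall j, (0 < (s j : nat))%N] &&
                    ((\sum_j (s j : nat))%N == n)) mu [ffun j => T mu (s j) x]).
      rewrite [RHS]big_mkcondl; apply: eq_bigr => s _; case: ifP => // /negbT /forallPn [j].
      by rewrite -eqn0Ngt => /eqP hj; apply: zero_slot; exists j.
    pose PP := fun u : {ffun 'I_d -> nat} => [forall j, (0 < u j)%N] && ((\sum_j u j)%N == n).
    pose GG := fun u : {ffun 'I_d -> nat} => mu [ffun j => T mu (u j) x].
    have cv : forall B, \sum_(s : {ffun 'I_d -> 'I_B.+1} | [forall j, (0 < (s j : nat))%N] &&
                    ((\sum_j (s j : nat))%N == n)) mu [ffun j => T mu (s j) x]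
              = \sum_(s : {ffun 'I_d -> 'I_B.+1} | PP (vf s)) GG (vf s).
      move=> B; apply: eq_big => s.
        rewrite /PP; congr (_ && _).
          by apply: eq_forallb => j; rewrite ffunE.
        by congr (_ == _); apply: eq_bigr => j _; rewrite ffunE.
      by move=> _; rewrite /GG; congr mu; apply/ffunP => j; rewrite !ffunE.
    rewrite !cv.
    case: (leqP p' n) => h.
      rewrite [RHS](@sum_widen p' n) //.
      move=> u _ [j hj]; apply: (@mu_zero _ j); rewrite ffunE; apply: hT; rewrite ep; exact: hj.
    rewrite [LHS](@sum_widen n p') //; first exact: ltnW.
    move=> u /andP[_ /eqP S] [j hj].
    by have := @sum_ge (fun i => u i) j; rewrite S; lia.
  rewrite big1; last first.
    move=> s /eqP S.
    case: (boolP [exists j, (s j : nat) == 0%N]) => [/existsP [j /eqP hj]|/existsPn all].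
      by apply: zero_slot; exists j.
    have pos : forall j, (0 < (s j : nat))%N by move=> j; have := all j; rewrite lt0n.
    have h0 : (0 < d)%N by lia.
    have := @part_lt (fun j => s j : nat) (Ordinal h0) pos; have := pos (Ordinal h0).
    rewrite S; lia.
  have : (n : nat) = 0%N \/ (n : nat) = 1%N by lia.
  by case => ->; rewrite ?T0 ?T1 /= ?subr0 ?subrr.
rewrite (eq_bigr _ (fun n _ => claim n)) sumrB.
have hN : (p'.+1 <= N)%N by rewrite /N; nia.
congr (_ - _).
  rewrite [RHS](big_ord_widen _ (fun q => T mu q x) hN).
  rewrite [LHS](bigID (fun n : 'I_N => (n < p'.+1)%N)) /= [X in _ + X]big1 ?addr0 //.
  by move=> n hn; apply: hT; rewrite ep; lia.
clear claim zero_slot.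
rewrite {}/N in hN *; case: p' ep hN => [|p'] ep hN.
  rewrite muln0 big_ord1 /=; symmetry; have := hT x 1%N; rewrite ep => h; exact: h.
have h1 : (1 < (d * p'.+1).+1)%N by nia.
rewrite (bigD1 (Ordinal h1)) //= big1 ?addr0 // => i ne.
have : (i : nat) != 1%N by apply: contra ne => /eqP e; apply/eqP/val_inj.
by move/negbTE => ->.
Qed.

Variables (y z : A) (K : nat).
Hypothesis hK : (d < K)%N.

Definition M (u : A) := mu [ffun _ => u].
Definition X n : A := (if n == 1%N then y else 0) - (if n == d then M y else 0)
  + (if n == K then z else 0).
Definition Win q n : bool :=
  [|| (n <= d * q)%N, ((K <= n)%N && (n + d <= K + d * q)%N) | (2 * K <= n)%N].
Definition Good q n : bool := [&& (0 < n)%N, (n <= K * q)%N & Win q n].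

Lemma Good_sum (t s : 'I_d -> nat) :
  (forall j, Good (t j) (s j)) -> Good (\sum_j t j) (\sum_j s j).
Proof.
move=> H; have h0 : (0 < d)%N by lia.
apply/and3P; split.
- have := @sum_ge s (Ordinal h0); have := H (Ordinal h0); case/and3P => ? _ _; lia.
- rewrite big_distrr /=; apply: leq_sum => j _; by case/and3P: (H j).
- apply: (big_ind2 (fun q n => Win q n)).
  + by rewrite /Win muln0 leqnn.
  + move=> x1 x2 y1 y2; rewrite /Win mulnDr; lia.
  + by move=> j _; case/and3P: (H j).
Qed.

Lemma X_support n : ~~ Good 1 n -> X n = 0.
Proof.
move=> hG; rewrite /X.
have -> : (n == 1%N) = false by move: hG; rewrite /Good /Win; lia.
have -> : (n == d) = false by move: hG; rewrite /Good /Win; lia.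
have -> : (n == K) = false by move: hG; rewrite /Good /Win; lia.
by rewrite subrr addr0.
Qed.

Lemma ev_widen B1 B2 c l : (B1 <= B2)%N -> (forall n, (B1 <= n)%N -> c n = 0) ->
  ev B1 c l = ev B2 c l.
Proof.
move=> hB hc; rewrite /ev (big_ord_widen _ (fun n => l ^+ n *: c n) hB).
rewrite [RHS](bigID (fun i : 'I_B2 => (i < B1)%N)) /= [X in _ = _ + X]big1 ?addr0 //.
by move=> i hi; rewrite hc ?scaler0 // leqNgt.
Qed.

Lemma ev_sum (I : finType) (P : pred I) B (c : I -> nat -> A) l :
  ev B (fun n => \sum_(i | P i) c i n) l = \sum_(i | P i) ev B (c i) l.
Proof. rewrite /ev; under eq_bigr do rewrite scaler_sumr; exact: exchange_big. Qed.

Lemma ev0 B l : ev B (fun _ => 0) l = 0.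
Proof. by rewrite /ev big1 // => i _; rewrite scaler0. Qed.

Lemma ev_sub B a b l : ev B (fun n => a n - b n) l = ev B a l - ev B b l.
Proof. by rewrite /ev -sumrB; apply: eq_bigr => i _; rewrite scalerBr. Qed.

Definition xl l := ev K.+1 X l.

Lemma T_poly f : forall q, {c : nat -> A | (forall n, ~~ Good q n -> c n = 0) /\
    (forall l, Tfuel mu f q (xl l) = ev (K * q).+1 c l)}.
Proof.
elim: f => [|f IH] q.
  by exists (fun _ => 0); split => // l; rewrite ev0.
case: (eqVneq q 1%N) => [->|q1].
  exists X; split; first exact: X_support.
  by move=> l /=; rewrite muln1.
pose B := (K * q)%N.
have supp : forall t : {ffun 'I_d -> 'I_q.+1}, (\sum_j (t j : nat))%N = q ->
    forall n, ~~ Good q n -> conv B (fun j => sval (IH (t j))) n = 0.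
  move=> t S n hn; rewrite /conv; apply: big1 => s /eqP Ss.
  case: (boolP [forall j, Good (t j) (s j)]) => [/forallP all|/forallPn [j hj]].
    by have := @Good_sum (fun j => t j) (fun j => s j) all; rewrite S Ss (negbTE hn).
  apply: (@mu_zero _ j); rewrite ffunE; exact: (proj1 (svalP (IH (t j))) _ hj).
pose cc := fun n => \sum_(t : {ffun 'I_d -> 'I_q.+1} | [forall j, (0 < (t j : nat))%N] &&
   ((\sum_(j < d) (t j : nat))%N == q)) conv B (fun j => sval (IH (t j))) n.
exists cc; split.
  move=> n hn; apply: big1 => t /andP[_ /eqP S]; exact: supp.
move=> l; rewrite /= (negbTE q1) /cc ev_sum.
apply: eq_bigr => t /andP[/forallP pos /eqP S].
transitivity (mu [ffun j => ev B.+1 (sval (IH (t j))) l]).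
  congr mu; apply/ffunP => j; rewrite !ffunE (proj2 (svalP (IH (t j)))).
  apply: ev_widen.
    by rewrite ltnS leq_mul2l; have := @sum_ge (fun i => t i : nat) j; rewrite S => ->; rewrite orbT.
  move=> n hn; apply: (proj1 (svalP (IH (t j)))); apply/negP => /and3P[_ h _]; lia.
rewrite mu_ev; symmetry; apply: ev_widen; first by rewrite ltnS leq_pmull //; lia.
move=> n hn; apply: supp => //; apply/negP => /and3P[_ h _]; rewrite /B in hn; lia.
Qed.

Definition c_of q := sval (T_poly q q).
Definition R n := \sum_(q < p) (if (q %% d.-1 == 1 %% d.-1)%N then c_of q n else 0).

Lemma R_zero n : (forall q, (q < p)%N -> (q %% d.-1 == 1 %% d.-1)%N -> ~~ Good q n) -> R n = 0.
Proof.
move=> H; rewrite /R big1 // => q _; case: ifP => // h.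
by apply: (proj1 (svalP (T_poly q q))); exact: H.
Qed.

Lemma R_big n : (K * p < n)%N -> R n = 0.
Proof. move=> hn; apply: R_zero => q hq _; apply/negP => /and3P[_ h _]; nia. Qed.

Lemma Phi_ev l : Fs (xl l) = ev (K * p).+1 R l.
Proof.
have -> : ev (K * p).+1 R l = \sum_(q < p) ev (K * p).+1
    (fun n => if (q %% d.-1 == 1 %% d.-1)%N then c_of q n else 0) l.
  exact: (@ev_sum 'I_p xpredT (K * p).+1
    (fun q n => if (q %% d.-1 == 1 %% d.-1)%N then c_of q n else 0) l).
rewrite /Fs.
apply: eq_bigr => q _; case: (boolP (q %% d.-1 == 1 %% d.-1)%N) => h /=.
  rewrite /T (proj2 (svalP (T_poly q q))); apply: ev_widen.
    by rewrite ltnS leq_mul2l ltnW ?orbT.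
  move=> n hn; apply: (proj1 (svalP (T_poly q q))); apply/negP => /and3P[_ h' _]; lia.
by rewrite ev0 /T Tfuel_mod.
Qed.

Definition BB := (K * p + 2 * K)%N.

Lemma R_rec n : (n < (d * BB).+1)%N -> R n = X n + conv BB (fun _ => R) n.
Proof.
have hR : forall B, (K * p < B)%N -> forall l, ev B R l = Fs (xl l).
  move=> B hB l; rewrite Phi_ev; symmetry; apply: ev_widen => //.
  by move=> m hm; apply: R_big.
have key : forall l, ev (d * BB).+1 (fun n => R n - X n - conv BB (fun _ => R) n) l = 0.
  move=> l; rewrite !ev_sub.
  rewrite hR; last by rewrite /BB; nia.
  have -> : ev (d * BB).+1 X l = xl l.
    symmetry; apply: ev_widen; first by rewrite /BB; nia.
    move=> m hm; apply: X_support; apply/negP => /and3P[_ h _]; lia.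
  rewrite -mu_ev.
  have -> : [ffun _ : 'I_d => ev BB.+1 R l] = [ffun _ => Fs (xl l)].
    by apply/ffunP => j; rewrite !ffunE hR // /BB; lia.
  by rewrite F1 subrr.
move=> hn; have := ev_inj key hn => /= /eqP.
by rewrite subr_eq0 subr_eq => /eqP ->; rewrite addrC.
Qed.

Definition V (j : nat) : A :=
  if (d.-1 %| j)%N then (d%:R ^+ (j %/ d.-1)) *: adn mu (j %/ d.-1) y z else 0.
Definition R' (n : nat) : A :=
  (if n == 1%N then y else 0) + (if (K <= n)%N then V (n - K) else 0).

Lemma ad_scale a v : ad mu y (a *: v) = a *: ad mu y v.
Proof.
have hl : (d.-1 < d)%N by lia.
have E : forall w, ad mu y w = mu (upd [ffun _ => y] (Ordinal hl) w).
  move=> w; rewrite /ad /upd; congr mu; apply/ffunP => j; rewrite !ffunE.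
  by rewrite -val_eqE.
by rewrite !E mu_updZ.
Qed.

Lemma V_step j : (d.-1 <= j)%N -> V j = d%:R *: ad mu y (V (j - d.-1)).
Proof.
move=> hj; rewrite /V.
have hd : (0 < d.-1)%N by lia.
have -> : (d.-1 %| j - d.-1)%N = (d.-1 %| j)%N by rewrite dvdn_subl.
case: ifP => hdv; last by rewrite -[0 : A](scale0r (0 : A)) ad_scale !scale0r scaler0.
have -> : (j %/ d.-1 = (j - d.-1) %/ d.-1 + 1)%N.
  by rewrite -[in LHS](subnK hj) divnDr // divnn hd.
by rewrite ad_scale scalerA addn1 exprS /adn iterS.
Qed.

Lemma R0 : R 0 = 0.
Proof. by apply: R_zero => q _ _; rewrite /Good ltnn. Qed.

Lemma R'0 : R' 0 = 0.
Proof.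
rewrite /R' /=; have -> : (K <= 0)%N = false by lia.
by rewrite addr0.
Qed.

Lemma sum1_ord n : (\sum_(i < n) 1 = n)%N.
Proof. by rewrite sum_nat_const card_ord muln1. Qed.

Lemma sum_ge2 (t : 'I_d -> nat) i j : i != j -> (t i + t j <= \sum_l t l)%N.
Proof. by move=> ne; rewrite (bigD1 i) //= (bigD1 j) /= 1?eq_sym //; lia. Qed.

Lemma sum_pick B (P : pred {ffun 'I_d -> 'I_B}) (a : {ffun 'I_d -> 'I_B}) (v : A) :
  \sum_(s | P s) (if s == a then v else 0) = if P a then v else 0.
Proof.
case: (boolP (P a)) => Pa.
  rewrite (bigD1 a) //= eqxx big1 ?addr0 // => s /andP[_ ne]; by rewrite (negbTE ne).
by apply: big1 => s Ps; case: eqP => // e; move: Pa; rewrite -e Ps.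
Qed.

Lemma conv_R' m : (0 < m)%N -> (m < 2 * K)%N ->
  conv BB (fun _ => R') m = (if m == d then M y else 0) +
     (if (K + d.-1 <= m)%N then d%:R *: ad mu y (V (m - d.-1 - K)) else 0).
Proof.
move=> m0 m2.
have hBB : (2 * K <= BB)%N by rewrite /BB; lia.
pose ones : {ffun 'I_d -> 'I_BB.+1} := [ffun _ => inord 1].
pose e (j0 : 'I_d) : {ffun 'I_d -> 'I_BB.+1} :=
  [ffun j => if j == j0 then inord (m - d.-1) else inord 1].
have v1 : ((inord 1 : 'I_BB.+1) : nat) = 1%N by rewrite inordK //; lia.
have vm : ((inord (m - d.-1) : 'I_BB.+1) : nat) = (m - d.-1)%N by rewrite inordK //; lia.
have ones_v : forall j, (ones j : nat) = 1%N by move=> j; rewrite ffunE v1.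
have e_v : forall j0 j, (e j0 j : nat) = if j == j0 then (m - d.-1)%N else 1%N.
  by move=> j0 j; rewrite ffunE; case: ifP.
have eq_ff : forall s1 s2 : {ffun 'I_d -> 'I_BB.+1}, (forall j, (s1 j : nat) = s2 j) -> s1 = s2.
  by move=> s1 s2 h; apply/ffunP => j; apply: val_inj; exact: h.
have R'1 : R' 1 = y.
  by rewrite /R' /= ifF ?addr0 //; lia.
have R'big : forall v, v != 1%N -> (K <= v)%N -> R' v = V (v - K).
  by move=> v h1 h2; rewrite /R' (negbTE h1) h2 add0r.
have R'small : forall v, v != 1%N -> ~~ (K <= v)%N -> R' v = 0.
  by move=> v h1 h2; rewrite /R' (negbTE h1) (negbTE h2) addr0.
set W := ad mu y (V (m - d.-1 - K)).
set C := (K + d.-1 <= m)%N.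
have pt : forall s : {ffun 'I_d -> 'I_BB.+1}, (\sum_j (s j : nat))%N = m ->
   mu [ffun j => R' (s j)] = (if s == ones then M y else 0) +
      \sum_(j0 < d) (if s == e j0 then (if C then W else 0) else 0).
  move=> s S.
  case: (boolP [exists j, ((s j : nat) != 1%N) && ~~ (K <= s j)%N]) =>
      [/existsP [j /andP [h1 h2]] | /existsPn hall].
    rewrite (@mu_zero _ j); last by rewrite ffunE R'small.
    have -> : (s == ones) = false.
      by apply/negbTE; apply: contra h1 => /eqP ->; rewrite ones_v.
    rewrite add0r big1 // => j0 _.
    case: (boolP (s == e j0)) => [/eqP es|] //=.
    move: h1 h2; rewrite es e_v; case: (j == j0) => //= _ h2.
    by rewrite /C; case: ifP => // hc; exfalso; lia.
  case: (boolP [forall j, (s j : nat) == 1%N]) => [/forallP all1 | /forallPn [j0 hj0]].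
    have so : s = ones by apply: eq_ff => j; rewrite ones_v; exact/eqP.
    rewrite so eqxx big1 ?addr0.
      by rewrite /M; congr mu; apply/ffunP => j; rewrite !ffunE v1 R'1.
    move=> j0 _; case: (boolP (ones == e j0)) => [/eqP oe|] //=.
    have := ones_v j0; rewrite oe e_v eqxx => h.
    by rewrite /C; case: ifP => // hc; exfalso; lia.
  have hK0 : (K <= s j0)%N by have := hall j0; rewrite hj0 /= negbK.
  have others : forall j, j != j0 -> (s j : nat) = 1%N.
    move=> j ne; have := hall j; have := @sum_ge2 (fun i => s i : nat) j j0 ne.
    rewrite S; lia.
  have sj0 : (s j0 : nat) = (m - d.-1)%N.
    have e1 := sum1_ord d; rewrite (bigD1 j0) //= in e1.
    move: S; rewrite (bigD1 j0) //= (eq_bigr (fun _ => 1%N)); last by move=> j /others.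
    lia.
  have se : s = e j0.
    apply: eq_ff => j; rewrite e_v; case: eqVneq => [->|ne]; [exact: sj0 | exact: others].
  have hC : C by rewrite /C; lia.
  have -> : (s == ones) = false.
    by apply/negbTE; apply: contra hj0 => /eqP ->; rewrite ones_v.
  rewrite add0r (bigD1 j0) //= -se eqxx hC big1 ?addr0; last first.
    move=> j1 ne; case: (boolP (s == e j1)) => [/eqP es|] //=.
    by move: hj0; rewrite es e_v (_ : (j0 == j1) = false) //; apply/negbTE; rewrite eq_sym.
  rewrite /W -(mu_sym_upd y _ j0); congr mu; apply/ffunP => j; rewrite !ffunE.
  case: eqVneq => [->|ne]; last by rewrite others // R'1.
  by rewrite R'big ?sj0 //; lia.
rewrite /conv (eq_bigr _ (fun s hs => pt s (eqP hs))) big_split /= sum_pick.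
have -> : ((\sum_j (ones j : nat))%N == m) = (m == d).
  by rewrite (eq_bigr (fun _ => 1%N)) ?sum1_ord 1?eq_sym // => j _; rewrite ones_v.
congr (_ + _); rewrite exchange_big /=.
under eq_bigr do rewrite sum_pick.
rewrite /C; case: ifP => hc.
  transitivity (\sum_(i < d) W); last by rewrite sumr_const card_ord scaler_nat.
  apply: eq_bigr => j0 _; rewrite ifT //.
  apply/eqP; rewrite (bigD1 j0) //= e_v eqxx (eq_bigr (fun _ => 1%N)).
    have e1 := sum1_ord d; rewrite (bigD1 j0) //= in e1; lia.
  by move=> j ne; rewrite e_v (negbTE ne).
by apply: big1 => j0 _; case: ifP.
Qed.

Lemma R_eq n : (n < 2 * K)%N -> R n = R' n.
Proof.
elim/ltn_ind: n => n IH hn.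
case: n IH hn => [|n] IH hn; first by rewrite R0 R'0.
rewrite R_rec; last by rewrite /BB; nia.
have -> : conv BB (fun _ => R) n.+1 = conv BB (fun _ => R') n.+1.
  rewrite /conv; apply: eq_bigr => s /eqP S.
  case: (boolP [forall j, (s j < n.+1)%N]) => [/forallP lt | /forallPn [j hj]].
    congr mu; apply/ffunP => j; rewrite !ffunE; apply: IH; first exact: lt.
    exact: ltn_trans (lt j) hn.
  case: (boolP [exists j', (s j' : nat) == 0%N]) => [/existsP [j' /eqP h0] | /existsPn all].
    rewrite (@mu_zero _ j'); last by rewrite ffunE h0 R0.
    by rewrite (@mu_zero _ j') // ffunE h0 R'0.
  have pos : forall i, (0 < (s i : nat))%N by move=> i; have := all i; rewrite lt0n.
  by have := @part_lt (fun i => s i : nat) j pos; rewrite /= S => h; move: hj; rewrite h.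
rewrite conv_R' //.
rewrite /X /R'.
case: (ltnP n.+1 K) => hmK.
  have -> : (n.+1 == K) = false by lia.
  have -> : (K + d.-1 <= n.+1)%N = false by lia.
  by rewrite !addr0 subrK.
have -> : (n.+1 == 1%N) = false by lia.
have -> : (n.+1 == d) = false by lia.
rewrite subrr !add0r.
case: (eqVneq n.+1 K) => [mK|mK].
  have -> : (K + d.-1 <= n.+1)%N = false by lia.
  by rewrite mK subnn addr0 /V dvdn0 div0n expr0 scale1r.
rewrite add0r; case: ifP => h.
  rewrite (@V_step (n.+1 - K)); last lia.
  by rewrite subnAC.
rewrite /V ifF //; apply/negP => hdv; have := dvdn_leq _ hdv; lia.
Qed.

Definition Q := (1 + d.-1 * ((p - 2) %/ d.-1))%N.

Lemma window n : (n < 2 * K)%N -> (K + d * Q < n + d)%N -> R n = 0.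
Proof.
move=> h2 h3; apply: R_zero => q hq hmod; apply/negP => /and3P[h0 hKq hW].
have q1 : (1 <= q)%N by nia.
have hd : (0 < d.-1)%N by lia.
move: hmod; rewrite eqn_mod_dvd // => hdv.
have e : (q - 1 = (q - 1) %/ d.-1 * d.-1)%N by rewrite divnK.
have le : ((q - 1) %/ d.-1 <= (p - 2) %/ d.-1)%N by apply: leq_div2r; lia.
have qQ : (q <= Q)%N.
  rewrite /Q; have := leq_mul2l d.-1 ((q - 1) %/ d.-1) ((p - 2) %/ d.-1); rewrite le orbT; nia.
have : (d * q <= d * Q)%N by rewrite leq_mul2l qQ orbT.
move: hW; rewrite /Win; lia.
Qed.

Lemma final_sec : (d.-1 * (d * ((p - 2) %/ (d - 1)) + 1) < K)%N ->
  adn mu (d * ((p - 2) %/ (d - 1)) + 1) y z = 0.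
Proof.
set nn := (d * ((p - 2) %/ (d - 1)) + 1)%N => hKb.
have hd : (0 < d.-1)%N by lia.
have E1 : R (K + d.-1 * nn) = R' (K + d.-1 * nn) by apply: R_eq; lia.
have E2 : R (K + d.-1 * nn) = 0.
  apply: window; first lia.
  rewrite /Q /nn.
  have -> : (d - 1 = d.-1)%N by rewrite subn1.
  set m0 := ((p - 2) %/ d.-1)%N.
  nia.
have E0 : (K + d.-1 * nn == 1%N) = false by lia.
rewrite /R' E0 leq_addr add0r addKn /V in E1.
rewrite dvdn_mulr // mulKn // E2 in E1.
have := esym E1; move/eqP; rewrite scaler_eq0 (negbTE (expf_neq0 _ (natf_neq0 _))) /=; last lia.
by move/eqP.
Qed.


End Main.

Unset Implicit Arguments.
Set Strict Implicit.
Local Close Scope ring_scope.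

Theorem mainTheorem1 (k : fieldType) (A : lmodType k) (d : nat)
    (mu : {ffun 'I_d -> A} -> A) (p : nat) :
  (GRing.pchar k) =i pred0 ->
  (2 <= d)%N ->
  multilinear mu ->
  symmetric_op mu ->
  Yagzhev_nil_index mu p ->
  Engel mu /\ n_Engel mu (d * ((p - 2) %/ (d - 1)) + 1)%N.
Proof.
move=> char0 d2 ml sym hp.
have nE : n_Engel mu (d * ((p - 2) %/ (d - 1)) + 1)%N.
  move=> x y.
  apply: (@final_sec k A d mu d2 ml char0 sym p hp x y
            (d.-1 * (d * ((p - 2) %/ (d - 1)) + 1) + d + 1)%N);
    move: (d.-1 * (d * ((p - 2) %/ (d - 1)) + 1))%N => X; lia.
split; last exact: nE.
exists (d * ((p - 2) %/ (d - 1)) + 1)%N; split; last exact: nE.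
by rewrite addn1.
Qed.
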